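(* Let $\{\lambda_j\}_{j\in\mathbb N}$ be a non-increasing sequence of non-negative reals with $\lim_{j\to\infty}\lambda_j=0$. Then $$\lim_{j\to\infty}\frac{\ln(\ln\frac1{\lambda_j})}{\ln(\ln j)}=\infty$$ holds if and only if for every $\delta>0$, $$\lim_{j\to\infty}\frac{(\ln\frac1{\lambda_j})^{\alpha}}{\ln j}=\infty\quad\text{for all }\alpha\in(0,\delta).$$
   Context: If $\lambda_j=0$, $\ln\frac1{\lambda_j}$ is interpreted as $\infty$. *)

(* Defs.v *)
From HB Require Import structures.
From mathcomp Require Import all_boot all_order all_algebra.
From mathcomp Require Import all_classical all_reals all_analysis.
Set Implicit Arguments. Unset Strict Implicit. Unset Printing Implicit Defensive.
Import Order.TTheory GRing.Theory Num.Theory.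
Local Open Scope ring_scope.
Local Open Scope ereal_scope.

(* ln (1/l) as an extended real, with the paper's convention ln(1/0) = +oo *)
Definition lninv {R : realType} (l : R) : \bar R :=
  if l == 0%R then +oo else (ln (l^-1))%:E.

Definition lnE {R : realType} (x : \bar R) : \bar R :=
  match x with
  | r%:E => (ln r)%:E
  | +oo => +oo
  | -oo => -oo
  end.

Definition powE {R : realType} (x : \bar R) (a : R) : \bar R :=
  match x with
  | r%:E => (r `^ a)%:E
  | +oo => +oo
  | -oo => -oo
  end.

(* Main.v *)
Require Import Defs.
From HB Require Import structures.
From mathcomp Require Import all_boot all_order all_algebra.
From mathcomp Require Import all_classical all_reals all_analysis.
Import Order.TTheory GRing.Theory Num.Theory.
Import numFieldNormedType.Exports.
Local Open Scope classical_set_scope.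
Local Open Scope ring_scope.

Lemma ln_large {R : realType} (B : R) :
  \forall j \near \oo, B <= ln (j%:R : R).
Proof.
exists (Num.Def.trunc (expR B)).+1 => // j /= hj.
have h1 : expR B < j%:R.
  apply: (lt_le_trans (truncnS_gt _)); by rewrite ler_nat.
rewrite -{1}(expRK B) ler_ln ?ltW // posrE ?expR_gt0 //.
exact: lt_trans (expR_gt0 B) h1.
Qed.

Lemma lninv_pos {R : realType} (l : R) : 0 < l -> l < 1 ->
  lninv l = (ln l^-1)%:E /\ 0 < ln l^-1.
Proof.
move=> l0 l1; rewrite /lninv gt_eqF //; split => //.
by apply: ln_gt0; rewrite invf_gt1.
Qed.

Theorem lemma4 (R : realType) (lam : nat -> R)
  (lam_ge0 : forall j, 0 <= lam j)
  (lam_noninc : forall i j : nat, (i <= j)%N -> lam j <= lam i)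
  (lam_cvg0 : lam @ \oo --> 0) :
  ((fun j : nat => (lnE (lninv (lam j)) * ((ln (ln j%:R))^-1)%:E)%E)
     @ \oo --> +oo%E)
  <->
  (forall delta : R, 0 < delta ->
     forall alpha : R, 0 < alpha < delta ->
       (fun j : nat => (powE (lninv (lam j)) alpha * ((ln j%:R)^-1)%:E)%E)
         @ \oo --> +oo%E).
Proof.
have lt1 : \forall j \near \oo, lam j < 1 by exact: cvgr_lt lam_cvg0 _ ltr01.
split.
- move=> /cvgeyPge H delta _ alpha /andP[a0 _].
  apply/cvgeyPge => A.
  have HM := H (2 / alpha).
  near=> j.
  have lnj2 : Num.max A 2 <= ln (j%:R : R) by near: j; exact: ln_large.
  have lj1 : lam j < 1 by near: j.
  have HMj : ((2 / alpha)%:E <= lnE (lninv (lam j)) * ((ln (ln j%:R))^-1)%:E)%E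
    by near: j.
  move: lnj2; rewrite ge_max => /andP[Alnj lnj2].
  have lnj0 : 0 < ln (j%:R : R) by apply: lt_le_trans lnj2.
  have llnj0 : 0 < ln (ln (j%:R : R)) by apply: ln_gt0; apply: lt_le_trans lnj2; rewrite ltr1n.
  have [lam0|lam0] := eqVneq (lam j) 0.
    by rewrite /lninv lam0 eqxx /= gt0_mulye ?leey // lte_fin invr_gt0.
  have lp : 0 < lam j by rewrite lt_neqAle eq_sym lam0 lam_ge0.
  move: HMj; have [-> Lp] := lninv_pos (lam j) lp lj1; rewrite /= -EFinM lee_fin => HMj.
  set L := ln (lam j)^-1 in Lp HMj *.
  set l := ln (j%:R : R) in lnj0 llnj0 HMj Alnj lnj2 *.
  have h1 : 2 * ln l <= alpha * ln L.
        rewrite ler_pdivlMr // in HMj.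
    have := HMj; rewrite -(ler_pM2l a0) => h.
    apply: le_trans h; rewrite le_eqVlt; apply/orP; left; apply/eqP.
    by rewrite mulrA mulrCA mulfV ?gt_eqF // mulr1.
  have h2 : l ^+ 2 <= L `^ alpha.
    rewrite -ler_ln ?posrE ?powR_gt0 ?exprn_gt0 //.
    by rewrite ln_powR lnXn // -mulr_natl.
  apply: (le_trans Alnj).
  rewrite ler_pdivlMr // -expr2 //.
- move=> H; apply/cvgeyPge => A.
  pose M := Num.max A 1.
  have M0 : 0 < M by rewrite lt_max ltr01 orbT.
  have d0 : 0 < M^-1 + 1 by rewrite addr_gt0 // invr_gt0.
  have HM := H (M^-1 + 1) d0 M^-1.
  have := HM; rewrite invr_gt0 M0 ltrDl ltr01 /= => {}HM.
  have {}HM := cvgey_ge (HM isT) 1.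
  near=> j.
  have lnj2 : 2 <= ln (j%:R : R) by near: j; exact: ln_large.
  have lj1 : lam j < 1 by near: j.
  have HMj : (1%:E <= powE (lninv (lam j)) M^-1 * ((ln j%:R)^-1)%:E)%E
    by near: j; apply: HM.
  have lnj0 : 0 < ln (j%:R : R) by apply: lt_le_trans lnj2.
  have llnj0 : 0 < ln (ln (j%:R : R)) by apply: ln_gt0; apply: lt_le_trans lnj2; rewrite ltr1n.
  have [lam0|lam0] := eqVneq (lam j) 0.
    by rewrite /lninv lam0 eqxx /= gt0_mulye ?leey // lte_fin invr_gt0.
  have lp : 0 < lam j by rewrite lt_neqAle eq_sym lam0 lam_ge0.
  move: HMj; have [-> Lp] := lninv_pos (lam j) lp lj1; rewrite /= -EFinM lee_fin => HMj.
  rewrite /= -EFinM lee_fin.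
  set L := ln (lam j)^-1 in Lp HMj *.
  set l := ln (j%:R : R) in lnj0 llnj0 HMj lnj2 *.
  rewrite ler_pdivlMr // mul1r in HMj.
  have h1 : ln l <= M^-1 * ln L.
    rewrite -ln_powR ler_ln ?posrE ?powR_gt0 //.
  have h2 : M * ln l <= ln L.
    by rewrite -ler_pdivlMl // mulrC.
  rewrite ler_pdivlMr //; apply: le_trans h2.
  by rewrite ler_pM2r // le_max lexx.
Unshelve. all: end_near.
Qed.
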